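(* Let $k$ be a non-archimedean local field of residue characteristic $2$. Let $B(x)=\Delta x^2$ on $k$, where $\Delta$ is a non-square unit of $\mathfrak o$ with quadratic defect $\varpi^d\mathfrak o$. Let $z=q^{-\beta}$, $w=zq^{-1}$, and $t\in\mathfrak o\setminus\{0\}$ with $|t|=q^{-T}$. If $|2|\ge|\varpi^d t^2|$, then \[ X^B(\beta;t^2)=|\varpi|^{\lceil e/2\rceil}\,\frac{1-(zw)^{T+\lceil (d+1-e)/2\rceil}}{1-zw} + w\,|\varpi|^{\lfloor e/2\rfloor}\,\frac{1-(zw)^{T+\lfloor (d+1-e)/2\rfloor}}{1-zw}, \] and $X^B(\beta;t^2)=0$ otherwise.
   Context: $k$ has ring of integers $\mathfrak o$, uniformizer $\varpi$, residue field of cardinality $q$, absolute value normalized by $|\varpi|=q^{-1}$, and $e=\operatorname{ord}(2)$ is the ramification index. On $\mathfrak o^n$ use the additive Haar measure of total mass $1$. For a quadratic form $B$ on $k^n$, $\rho\in\mathfrak o$ and integer $\ell\ge0$: $X_\ell^B(\rho)=\operatorname{meas}\{x\in\mathfrak o^n: B(x)-\rho\in 2\varpi^\ell\mathfrak o\}$ and $X^B(\beta;\rho)=\sum_{\ell\ge0}z^\ell X_\ell^B(\rho)$ with $z=q^{-\beta}$. The quadratic defect of $\rho\in k$ is the intersection of all ideals $b\mathfrak o$ over those $b\in k$ for which $\rho-b$ is a square in $k$. *)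

(* Defs.v *)
From HB Require Import structures.
From mathcomp Require Import all_boot all_order all_algebra.
From mathcomp Require Import all_classical all_reals.
From mathcomp Require Import complex.
Set Implicit Arguments. Unset Strict Implicit. Unset Printing Implicit Defensive.
Import Order.TTheory GRing.Theory Num.Theory.
Local Open Scope ring_scope.
Local Open Scope classical_set_scope.
Local Open Scope complex_scope.

(* A field K with a discrete valuation v : K -> int (value at 0 is     *)
(* irrelevant junk; 0 is treated separately everywhere).               *)

Definition inO (K : fieldType) (v : K -> int) (x : K) : Prop :=
  x = 0 \/ (0 <= v x)%R.

Definition in_ideal (K : fieldType) (v : K -> int) (b x : K) : Prop :=
  exists a : K, inO v a /\ x = b * a.

Definition congr_mod (K : fieldType) (v : K -> int) (pi : K) (N : nat) (x y : K) : Prop :=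
  in_ideal v (pi ^+ N) (x - y).

(* (K, v) is a non-archimedean local field with uniformizer pi and residue
   field of cardinality q: v is a discrete valuation with v pi = 1, K is
   complete for it, and o / pi o has exactly q elements. *)
Record is_local_field (K : fieldType) (v : K -> int) (pi : K) (q : nat) : Prop := {
  lf_mul : forall x y : K, x != 0 -> y != 0 -> v (x * y) = v x + v y;
  lf_add : forall x y : K, x != 0 -> y != 0 -> x + y != 0 ->
             Num.min (v x) (v y) <= v (x + y);
  lf_pi_neq0 : pi != 0;
  lf_pi_val : v pi = 1;
  lf_residue : exists reps : seq K,
      size reps = q /\
      (forall r, r \in reps -> inO v r) /\
      (forall i j, (i < j < size reps)%N ->
          ~ congr_mod v pi 1 (nth 0 reps i) (nth 0 reps j)) /\
      (forall x, inO v x -> exists2 r, r \in reps & congr_mod v pi 1 x r);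
  lf_complete : forall u : nat -> K,
      (forall n : nat, exists N : nat, forall m p : nat, (N <= m)%N -> (N <= p)%N ->
          congr_mod v pi n (u m) (u p)) ->
      exists l : K, forall n : nat, exists N : nat, forall m : nat, (N <= m)%N ->
          congr_mod v pi n (u m) l
}.

Definition absv (R : realType) (K : fieldType) (v : K -> int) (q : nat) (x : K) : R :=
  if x == 0 then 0 else (q%:R : R) ^ (- v x).

Definition qdefect (K : fieldType) (v : K -> int) (rho : K) : set K :=
  [set x | forall b : K, (exists y : K, rho - b = y ^+ 2) -> in_ideal v b x].

(* Haar measure of total mass 1 on o (n = 1), for a closed set S:      *)
(*   meas S = lim_N  #{classes of o / pi^N o meeting S} / q^N          *)
(* (a decreasing sequence, so the limit is the infimum).               *)

Definition nclasses (R : realType) (K : fieldType) (v : K -> int) (pi : K)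
    (N : nat) (S : set K) : R :=
  sup [set (size l)%:R | l in
        [set l : seq K | (forall x, x \in l -> inO v x /\ S x) /\
           (forall i j, (i < j < size l)%N ->
              ~ congr_mod v pi N (nth 0 l i) (nth 0 l j))]].

Definition haar_o (R : realType) (K : fieldType) (v : K -> int) (pi : K) (q : nat)
    (S : set K) : R :=
  inf [set nclasses R v pi N S / (q%:R ^+ N) | N in [set: nat]].

Definition Xl (R : realType) (K : fieldType) (v : K -> int) (pi : K) (q : nat)
    (B : K -> K) (rho : K) (l : nat) : R :=
  haar_o R v pi q [set x | inO v x /\ in_ideal v (2 * pi ^+ l) (B x - rho)].

Definition series_to (R : realType) (a : nat -> R[i]) (L : R[i]) : Prop :=
  forall eps : R, 0 < eps -> exists N : nat, forall n : nat, (N <= n)%N ->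
    `| \sum_(i < n) a i - L | < eps%:C.

(* X^B(beta; rho) = sum_l z^l X_l^B(rho) = L  (z = q^{-beta}) *)
Definition XB_is (R : realType) (K : fieldType) (v : K -> int) (pi : K) (q : nat)
    (B : K -> K) (z : R[i]) (rho : K) (L : R[i]) : Prop :=
  series_to (fun l => z ^+ l * (Xl R v pi q B rho l)%:C) L.

(* Main.v *)
Require Import Defs.
From HB Require Import structures.
From mathcomp Require Import all_boot all_order all_algebra.
From mathcomp Require Import all_classical all_reals.
From mathcomp Require Import complex.
From mathcomp Require Import zify ring lra.
Import Order.TTheory GRing.Theory Num.Theory.
Local Open Scope ring_scope.
Set Implicit Arguments. Unset Strict Implicit. Unset Printing Implicit Defensive.

Section Val.
Variables (K : fieldType) (v : K -> int) (pi : K) (q : nat).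
Hypothesis hK : is_local_field v pi q.

Definition ge (n : int) (x : K) : Prop := x = 0 \/ n <= v x.

Lemma vM (x y : K) : x != 0 -> y != 0 -> v (x * y) = v x + v y.
Proof. move=> hx hy; exact: (lf_mul hK hx hy). Qed.

Lemma v1 : v 1 = 0.
Proof. have := vM (@oner_neq0 K) (@oner_neq0 K); rewrite mulr1 => h.
by apply/eqP; rewrite -(addrI (v 1) (etrans (esym h) (esym (addr0 _)))). Qed.

Lemma vN1 : v (-1) = 0.
Proof.
have h1 : (-1 : K) != 0 by rewrite oppr_eq0 oner_neq0.
have := vM h1 h1; rewrite mulrNN mulr1 v1 => h.
have : (2 * v (-1) == 0) by rewrite mulr2n mulrDl mul1r -h.
by rewrite mulf_eq0 => /orP[//|/eqP]. Qed.

Lemma vN x : v (- x) = v x.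
Proof.
case: (eqVneq x 0) => [->|hx]; first by rewrite oppr0.
have h1 : (-1 : K) != 0 by rewrite oppr_eq0 oner_neq0.
by rewrite -mulN1r vM // vN1 add0r. Qed.

Lemma vX x n : x != 0 -> v (x ^+ n) = n%:Z * v x.
Proof.
move=> hx; elim: n => [|n IH]; first by rewrite expr0 v1 mul0r.
by rewrite exprS vM ?expf_neq0 // IH intS mulrDl mul1r. Qed.

Lemma vV x : x != 0 -> v (x ^-1) = - v x.
Proof.
move=> hx.
have := vM hx (invr_neq0 hx); rewrite mulfV // v1 => /eqP.
by rewrite eq_sym addr_eq0 => /eqP ->; rewrite opprK. Qed.

Lemma ge0x n : ge n 0. Proof. by left. Qed.

Lemma ge_le m n x : m <= n -> ge n x -> ge m x.
Proof. by move=> hmn [->|h]; [left|right; exact: le_trans h]. Qed.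

Lemma ge_add n x y : ge n x -> ge n y -> ge n (x + y).
Proof.
move=> [->|hx]; first by rewrite add0r.
move=> [->|hy]; first by rewrite addr0; right.
case: (eqVneq x 0) => [->|x0]; first by rewrite add0r; right.
case: (eqVneq y 0) => [->|y0]; first by rewrite addr0; right.
case: (eqVneq (x + y) 0) => [->|s0]; first by left.
right; apply: le_trans (lf_add hK x0 y0 s0).
by rewrite le_min hx hy. Qed.

Lemma ge_opp n x : ge n x -> ge n (- x).
Proof. by move=> [->|h]; [left; rewrite oppr0|right; rewrite vN]. Qed.

Lemma ge_sub n x y : ge n x -> ge n y -> ge n (x - y).
Proof. by move=> hx hy; apply: ge_add => //; apply: ge_opp. Qed.

Lemma ge_mul a b x y : ge a x -> ge b y -> ge (a + b) (x * y).
Proof.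
move=> [->|hx]; first by rewrite mul0r; left.
move=> [->|hy]; first by rewrite mulr0; left.
case: (eqVneq x 0) => [->|x0]; first by rewrite mul0r; left.
case: (eqVneq y 0) => [->|y0]; first by rewrite mulr0; left.
by right; rewrite vM // lerD. Qed.

Lemma ge_v x : ge (v x) x.
Proof. by right. Qed.

Lemma v_strict x y : x != 0 -> ge (v x + 1) y -> x + y != 0 /\ v (x + y) = v x.
Proof.
move=> x0 hy.
have sx0 : x + y != 0.
  apply/eqP => h; have hy' : y = - x by rewrite -(addKr x y) h addr0.
  case: hy; rewrite hy' ?oppr_eq0 ?vN; first by move/eqP; rewrite oppr_eq0 (negbTE x0).
  by move=> ?; lia.
split=> //.
have h1 : ge (Num.min (v (x + y)) (v x + 1)) (x + y - y).
  by apply: ge_sub; [apply: ge_le (ge_v _); rewrite ge_min lexx|apply: ge_le hy; rewrite ge_min lexx orbT].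
rewrite addrK in h1.
have h2 : ge (v x) (x + y) by apply: ge_add; [exact: ge_v|apply: ge_le hy; rewrite lerDl].
case: h2 => [/eqP|h2]; first by rewrite (negbTE sx0).
apply/eqP; rewrite eq_le h2 andbT.
case: h1 => [/eqP|]; first by rewrite (negbTE x0).
rewrite ge_min => /orP[//|]. by rewrite -[X in _ <= X]addr0 lerD2l. Qed.


Lemma inO_ge x : inO v x <-> ge 0 x.
Proof. by []. Qed.

Lemma in_idealE b x : b != 0 -> (in_ideal v b x <-> ge (v b) x).
Proof.
move=> b0; split.
  move=> [a [[->|ha] ->]]; first by rewrite mulr0; left.
  case: (eqVneq a 0) => [->|a0]; first by rewrite mulr0; left.
  by right; rewrite vM // lerDl.
move=> [->|hx]; first by exists 0; split; [left|rewrite mulr0].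
case: (eqVneq x 0) => [->|x0]; first by exists 0; split; [left|rewrite mulr0].
exists (b^-1 * x); split; last by rewrite mulrA mulfV ?mul1r.
right; rewrite vM ?mulf_neq0 ?invr_neq0 // vV //; lia. Qed.

Lemma pi0 : pi != 0. Proof. exact: lf_pi_neq0 hK. Qed.
Lemma vpi : v pi = 1. Proof. exact: lf_pi_val hK. Qed.
Lemma piX0 n : pi ^+ n != 0. Proof. by rewrite expf_neq0 // pi0. Qed.
Lemma vpiX n : v (pi ^+ n) = n%:Z. Proof. by rewrite vX ?pi0 // vpi mulr1. Qed.

Lemma congrE N x y : congr_mod v pi N x y <-> ge N%:Z (x - y).
Proof. by rewrite /congr_mod in_idealE ?piX0 // vpiX. Qed.

Lemma ge_all0 x : (forall n : nat, ge n%:Z x) -> x = 0.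
Proof.
move=> h; case: (eqVneq x 0) => // x0.
have := h (`|v x|.+1)%N; case=> [->//|]; lia. Qed.


Lemma congr_ge N x y : congr_mod v pi N x y -> ge N%:Z (x - y).
Proof. by move/congrE. Qed.

Lemma local_square (c : K) : (2 : K) != 0 -> ge (v 2 + v 2 + 1) c ->
  exists y : K, 1 + c = y ^+ 2.
Proof.
move=> h2 hc.
have h4 : (2 * 2 : K) != 0 by rewrite mulf_neq0.
set g := c / (2 * 2).
have hg : ge 1 g.
  have := ge_mul hc (ge_v ((2 * 2 : K)^-1)).
  by rewrite vV // vM // (_ : v 2 + v 2 + 1 + - (v 2 + v 2) = 1) //; lia.
pose y := fix y (k : nat) : K := if k is k'.+1 then g - (y k') ^+ 2 else 0.
have yS k : y k.+1 = g - (y k) ^+ 2 by [].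
have P1 k : ge 1 (y k).
  elim: k => [|k IH]; first by left.
  rewrite yS; apply: ge_sub => //; apply: (@ge_le 1 2); first by [].
  by rewrite expr2; exact: (ge_mul IH IH).
have P2 k : ge (k.+1)%:Z (y k.+1 - y k).
  elim: k => [|k IH]; first by rewrite yS /= expr2 mulr0 subr0 subr0.
  have -> : y k.+2 - y k.+1 = - ((y k.+1 - y k) * (y k.+1 + y k)).
    by rewrite !yS; ring.
  apply: ge_opp; have := ge_mul IH (ge_add (P1 k.+1) (P1 k)).
  by rewrite (_ : k.+1%:Z + 1 = k.+2%:Z) //; lia.
have P3 n m : ge n%:Z (y (m + n)%N - y n).
  elim: m => [|m IH]; first by rewrite add0n subrr; left.
  have -> : y (m.+1 + n)%N - y n = (y (m + n).+1 - y (m + n)%N) + (y (m + n)%N - y n).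
    by rewrite addSn; ring.
  apply: ge_add => //; apply: ge_le (P2 _); lia.
have cauchy : forall n : nat, exists N : nat, forall m p : nat, (N <= m)%N -> (N <= p)%N ->
   congr_mod v pi n (y m) (y p).
  move=> n; exists n => m p hm hp; apply/congrE.
  have -> : y m - y p = (y (m - n + n)%N - y n) - (y (p - n + n)%N - y n).
    by rewrite !subnK //; ring.
  by apply: ge_sub.
have [l hl] := lf_complete hK cauchy.
have hl' n : exists N, forall m, (N <= m)%N -> ge n%:Z (y m - l).
  by have [N hN] := hl n; exists N => m hm; apply/congrE; exact: hN.
have l1 : ge 1 l.
  have [N hN] := hl' 1%N.
  have -> : l = y N - (y N - l) by ring.
  by apply: ge_sub => //; exact: hN.
have eql : l + l ^+ 2 - g = 0.
  apply: ge_all0 => n; have [N hN] := hl' n.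
  have -> : l + l ^+ 2 - g = - (y N.+1 - l) - (y N - l) * (l + y N).
    by rewrite yS; ring.
  apply: ge_sub; first by apply: ge_opp; apply: hN.
  have := ge_mul (hN N (leqnn _)) (ge_add l1 (P1 N)).
  by apply: ge_le; lia.
exists (1 + 2 * l).
have -> : c = g * (2 * 2) by rewrite /g divfK.
have -> : g = l + l ^+ 2 by apply/eqP; rewrite eq_sym -subr_eq0 eql.
ring. Qed.


Lemma not_ge n x : ~ ge n x <-> x != 0 /\ v x < n.
Proof.
split.
  move=> h; case: (eqVneq x 0) => [x0|x0]; first by case: h; left.
  by split=> //; rewrite ltNge; apply/negP => hx; apply: h; right.
by move=> [x0 hx] [/eqP|]; [rewrite (negbTE x0)|rewrite leNgt hx].
Qed.

Lemma not_ge_strict n x y : x != 0 -> v x < n -> ge (v x + 1) y -> ~ ge n (x + y).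
Proof.
move=> x0 hx hy; have [s0 vs] := v_strict x0 hy.
by apply/not_ge; rewrite vs. Qed.

Lemma v2sq x : x != 0 -> v (x ^+ 2) = v x + v x.
Proof. by move=> x0; rewrite vX //; lia. Qed.

Lemma ge_sq n x : ge n x -> ge (n + n) (x ^+ 2).
Proof. by move=> h; rewrite expr2; apply: ge_mul. Qed.

Lemma char_i (D t x : K) (n : int) (c : nat) :
  v D = 0 -> D != 0 -> t != 0 -> n <= (c + c)%:Z -> (c + c)%:Z <= n + 1 ->
  n <= v t + v t ->
  (ge n (D * x ^+ 2 - t ^+ 2) <-> ge c%:Z x).
Proof.
move=> vD D0 t0 h1 h2 h3; split; last first.
  move=> hx; apply: ge_sub.
    have := ge_mul (ge_v D) (ge_sq hx); rewrite vD add0r; apply: ge_le; lia.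
  by apply: ge_le (ge_sq (ge_v t)).
move=> h; case: (pselect (ge c%:Z x)) => // /not_ge [x0 vx]; exfalso.
have A : D * x ^+ 2 != 0 by rewrite mulf_neq0 ?expf_neq0.
have vA : v (D * x ^+ 2) = v x + v x by rewrite vM ?expf_neq0 // vD v2sq // add0r.
apply: (not_ge_strict (n := n) A); [rewrite vA; lia| |exact: h].
right; rewrite vN v2sq // vA; lia. Qed.


Lemma char_ii (D t s0 x : K) (n : int) (c d : nat) :
  v D = 0 -> t != 0 -> s0 != 0 -> v s0 = 0 -> (2 : K) != 0 ->
  ge d%:Z (D - s0 ^+ 2) -> (1 <= d)%N -> d%:Z <= v 2 + v 2 ->
  v t + v t < n -> n <= v t + v t + d%:Z ->
  n <= (c + c)%:Z -> (c + c)%:Z <= n + 1 -> ge 0 x ->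
  (ge n (D * x ^+ 2 - t ^+ 2) <-> ge c%:Z (x - t / s0)).
Proof.
move=> vD t0 s00 vs0 h2 hb d1 d2e h1 h2' h3 h4 hx.
set b := D - s0 ^+ 2; set y := s0 * x - t.
have id1 : D * x ^+ 2 - t ^+ 2 = y * (y + 2 * t) + b * x ^+ 2 by rewrite /y /b; ring.
have id2 : x - t / s0 = s0^-1 * y by rewrite /y mulrBr mulrA mulVf // mul1r mulrC.
have id3 : x = s0^-1 * (y + t) by rewrite /y subrK mulrA mulVf // mul1r.
have vs0i : v s0^-1 = 0 by rewrite vV // vs0 oppr0.
have v2t : v (2 * t) = v 2 + v t by rewrite vM.
have t2 : 2 * t != 0 by rewrite mulf_neq0.
have eqy : ge c%:Z (x - t / s0) <-> ge c%:Z y.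
  rewrite id2; split => h.
    have -> : y = s0 * (s0^-1 * y) by rewrite mulrA mulfV // mul1r.
    by have := ge_mul (ge_v s0) h; rewrite vs0 add0r.
  by have := ge_mul (ge_v s0^-1) h; rewrite vs0i add0r.
rewrite eqy id1; split; last first.
  move=> hy; have hx' : ge (v t) x.
    have hy' : ge (v t) y by apply: ge_le hy; lia.
    by rewrite id3; have := ge_mul (ge_v s0^-1) (ge_add hy' (ge_v t)); rewrite vs0i add0r.
  apply: ge_add.
    have h2t : ge c%:Z (2 * t) by apply: ge_le (ge_v _); rewrite v2t; lia.
    by have := ge_mul hy (ge_add hy h2t); apply: ge_le; lia.
  by have := ge_mul hb (ge_sq hx'); apply: ge_le; lia.
move=> h; case: (pselect (ge c%:Z y)) => // /not_ge [y0 vy]; exfalso.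
have [s1 vs1] : y + 2 * t != 0 /\ v (y + 2 * t) = v y.
  by apply: v_strict => //; right; rewrite v2t; lia.
have A : y * (y + 2 * t) != 0 by rewrite mulf_neq0.
have vA : v (y * (y + 2 * t)) = v y + v y by rewrite vM // vs1.
apply: (not_ge_strict (n := n) A); [rewrite vA; lia| |exact: h].
rewrite vA.
case: (lerP (v y) (v t)) => hyt.
  have hx' : ge (v y) x.
    rewrite id3; have := ge_mul (ge_v s0^-1) (ge_add (ge_v y) (ge_le (n := v t) hyt (ge_v t))).
    by rewrite vs0i add0r.
  by have := ge_mul hb (ge_sq hx'); apply: ge_le; lia.
have hx' : ge (v t) x.
  rewrite id3; have := ge_mul (ge_v s0^-1) (ge_add (ge_le (n := v y) (ltW hyt) (ge_v y)) (ge_v t)).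
  by rewrite vs0i add0r.
by have := ge_mul hb (ge_sq hx'); apply: ge_le; lia.
Qed.


Lemma char_iii (D t x : K) (n : int) (d : nat) :
  v D = 0 -> D != 0 -> t != 0 ->
  (forall s, D - s ^+ 2 != 0 /\ v (D - s ^+ 2) <= d%:Z) ->
  v t + v t + d%:Z < n -> ~ ge n (D * x ^+ 2 - t ^+ 2).
Proof.
move=> vD D0 t0 hs hn.
have tt0 : - t ^+ 2 != 0 by rewrite oppr_eq0 expf_neq0.
have vtt : v (- t ^+ 2) = v t + v t by rewrite vN v2sq.
case: (eqVneq x 0) => [->|x0].
  rewrite expr0n /= mulr0 add0r; apply/not_ge; split=> //; rewrite vtt; lia.
have A : D * x ^+ 2 != 0 by rewrite mulf_neq0 ?expf_neq0.
have vA : v (D * x ^+ 2) = v x + v x by rewrite vM ?expf_neq0 // vD v2sq // add0r.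
case: (ltgtP (v x) (v t)) => hxt.
- apply: (not_ge_strict A); first by rewrite vA; lia.
  by right; rewrite vtt vA; lia.
- rewrite addrC; apply: (not_ge_strict tt0); first by rewrite vtt; lia.
  by right; rewrite vtt vA; lia.
- have -> : D * x ^+ 2 - t ^+ 2 = x ^+ 2 * (D - (t / x) ^+ 2).
    by rewrite mulrBr mulrC; congr (_ - _); rewrite expr_div_n mulrCA divff ?mulr1 // expf_neq0.
  have [h0 hv] := hs (t / x).
  apply/not_ge; split; first by rewrite mulf_neq0 ?expf_neq0.
  rewrite vM ?expf_neq0 // v2sq // hxt; move: hv; set w := v (D - _) => hv; lia.
Qed.


Section Defect.
Variables (D : K) (d : nat).
Hypotheses (hDns : ~ exists y : K, D = y ^+ 2)
  (hdef : forall x : K, qdefect v D x <-> in_ideal v (pi ^+ d) x).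

Lemma defect_le s : D - s ^+ 2 != 0 /\ v (D - s ^+ 2) <= d%:Z.
Proof.
have b0 : D - s ^+ 2 != 0.
  by apply/eqP => h; apply: hDns; exists s; apply/eqP; rewrite -subr_eq0 h.
split=> //.
have : qdefect v D (pi ^+ d) by apply/hdef/in_idealE; rewrite ?piX0 // vpiX; right; rewrite vpiX.
move=> /(_ (D - s ^+ 2)) []; first by exists s; ring.
move=> a [ha e1].
move: (@in_idealE (D - s ^+ 2) (pi ^+ d) b0) => [] h _.
case: (h (ex_intro _ a (conj ha e1))) => [/eqP|]; first by rewrite (negbTE (piX0 d)).
by rewrite vpiX. Qed.

Lemma defect_attained : (1 <= d)%N -> exists s0, ge d%:Z (D - s0 ^+ 2).
Proof.
move=> d1; case: (pselect (exists s0, ge d%:Z (D - s0 ^+ 2))) => // hn; exfalso.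
have lt s : v (D - s ^+ 2) < d%:Z.
  case: (pselect (ge d%:Z (D - s ^+ 2))) => [h|/not_ge[]//]; by case: hn; exists s.
have : qdefect v D (pi ^+ d.-1).
  move=> b [y hy]; have -> : b = D - y ^+ 2 by rewrite -hy; ring.
  apply/in_idealE; first by case: (defect_le y).
  by right; rewrite vpiX -subn1; have := lt y; set w := v _; lia.
move/hdef; rewrite in_idealE ?piX0 // vpiX => -[/eqP|].
  by rewrite (negbTE (piX0 _)).
by rewrite vpiX -subn1; lia. Qed.

Lemma defect_le2e : (2 : K) != 0 -> v D = 0 -> d%:Z <= v 2 + v 2.
Proof.
move=> h2 vD; case: (posnP d) => [->|d1].
  have : 0 <= v 2; last by lia.
  by have := lf_add hK (oner_neq0 K) (oner_neq0 K) h2; rewrite v1 minxx.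
have [s0 hs0] := defect_attained d1.
rewrite leNgt; apply/negP => hd.
set b := D - s0 ^+ 2 in hs0.
have s00 : s0 != 0.
  apply/eqP => s0e; move: hs0; rewrite /b s0e expr0n /= subr0 => -[D0|]; last by rewrite vD; lia.
  have : D != 0 by apply/eqP => D0'; apply: hDns; exists 0; rewrite D0' expr0n.
  by rewrite D0 eqxx.
have vs0 : v (s0 ^+ 2) = 0.
  have e1 : s0 ^+ 2 = D + - b by rewrite /b; ring.
  have D0 : D != 0 by apply/eqP => D0'; apply: hDns; exists 0; rewrite D0' expr0n.
  have hb1 : ge (v D + 1) (- b) by apply: ge_opp; apply: ge_le hs0; rewrite vD; lia.
  by have [_ h] := v_strict D0 hb1; rewrite e1 h vD.
have hc : ge (v 2 + v 2 + 1) (b / s0 ^+ 2).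
  have := ge_mul hs0 (ge_v (s0 ^+ 2)^-1); rewrite vV ?expf_neq0 // vs0 oppr0 addr0.
  by apply: ge_le; lia.
have [y hy] := local_square h2 hc.
apply: hDns; exists (s0 * y); rewrite exprMn -hy mulrDr mulr1 mulrCA divff ?expf_neq0 //.
by rewrite mulr1 /b; ring. Qed.

Lemma good_s0 : v D = 0 -> (1 <= d)%N ->
  exists s0, [/\ ge d%:Z (D - s0 ^+ 2), s0 != 0 & v s0 = 0].
Proof.
move=> vD d1; have [s0 hs0] := defect_attained d1.
have D0 : D != 0 by apply/eqP => D0'; apply: hDns; exists 0; rewrite D0' expr0n.
set b := D - s0 ^+ 2 in hs0.
have s00 : s0 != 0.
  apply/eqP => s0e; move: hs0; rewrite /b s0e expr0n /= subr0 => -[D0'|]; last by rewrite vD; lia.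
  by move: D0; rewrite D0' eqxx.
have vs0 : v (s0 ^+ 2) = 0.
  have e1 : s0 ^+ 2 = D + - b by rewrite /b; ring.
  have hb1 : ge (v D + 1) (- b) by apply: ge_opp; apply: ge_le hs0; rewrite vD; lia.
  by have [_ h] := v_strict D0 hb1; rewrite e1 h vD.
exists s0; split=> //; move: vs0; rewrite v2sq //; lia.
Qed.

End Defect.


Section Code.
Variable reps : seq K.
Hypotheses (hro : forall r, r \in reps -> inO v r)
  (hcov : forall x, inO v x -> exists2 r, r \in reps & congr_mod v pi 1 x r).

Definition cpred (x : K) := fun r : K => `[< congr_mod v pi 1 x r >].
Definition idx (x : K) : nat := find (cpred x) reps.
Definition shift (x : K) : K := (x - nth 0 reps (idx x)) / pi.
Fixpoint code (N : nat) (x : K) : nat :=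
  if N is N'.+1 then (idx x + size reps * code N' (shift x))%N else 0%N.

Lemma has_c x : inO v x -> has (cpred x) reps.
Proof. by move=> /hcov [r hr hc]; apply/hasP; exists r => //; apply: asboolT. Qed.

Lemma idx_lt x : inO v x -> (idx x < size reps)%N.
Proof. by move=> hx; rewrite -has_find has_c. Qed.

Lemma idx_congr x : inO v x -> ge 1 (x - nth 0 reps (idx x)).
Proof. by move=> hx; have := nth_find 0 (has_c hx); move/asboolW/congrE. Qed.

Lemma idx_inO x : inO v x -> inO v (nth 0 reps (idx x)).
Proof. by move=> hx; apply: hro; apply: mem_nth; exact: idx_lt. Qed.

Lemma shift_inO x : inO v x -> inO v (shift x).
Proof.
move=> hx; have := ge_mul (idx_congr hx) (ge_v pi^-1).
by rewrite vV ?pi0 // vpi addrN. Qed.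

Lemma code_lt N x : inO v x -> (code N x < size reps ^ N)%N.
Proof.
elim: N x => [|N IH] x hx /=; first by rewrite expn0.
have h1 := idx_lt hx; have h2 := IH _ (shift_inO hx).
rewrite expnS; nia. Qed.

Lemma code_inj N x y : inO v x -> inO v y -> code N x = code N y -> ge N%:Z (x - y).
Proof.
elim: N x y => [|N IH] x y hx hy /=.
  by move=> _; apply: ge_sub.
move=> he.
have h1 := idx_lt hx; have h2 := idx_lt hy.
have ei : idx x = idx y.
  have := congr1 (modn^~ (size reps)) he; rewrite /= ![(idx _ + _)%N]addnC ![(size reps * _)%N]mulnC !modnMDl.
  by rewrite !modn_small.
have ec : code N (shift x) = code N (shift y).
  by rewrite ei in he; move/eqP: he; rewrite eqn_add2l eqn_mul2l => /orP[/eqP hq|/eqP //]; lia.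
have := IH _ _ (shift_inO hx) (shift_inO hy) ec.
have -> : shift x - shift y = (x - y) / pi by rewrite /shift ei; field; rewrite pi0.
move=> h; have := ge_mul h (ge_v pi); rewrite vpi.
have -> : (x - y) / pi * pi = x - y by rewrite divfK ?pi0.
by apply: ge_le; lia. Qed.

Lemma size_bound N (l : seq K) : (forall x, x \in l -> inO v x) ->
  (forall i j, (i < j < size l)%N -> ~ congr_mod v pi N (nth 0 l i) (nth 0 l j)) ->
  (size l <= size reps ^ N)%N.
Proof.
move=> hl hinc.
have hu : uniq (map (code N) l).
  apply/(uniqP 0%N) => i j; rewrite !inE size_map => hi hj.
  rewrite !(nth_map 0) // => he.
  have hi' := hl _ (mem_nth 0 hi); have hj' := hl _ (mem_nth 0 hj).
  case: (ltngtP i j) => hij //.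
    by exfalso; apply: (hinc i j); [rewrite hij hj|apply/congrE; exact: code_inj].
  by exfalso; apply: (hinc j i); [rewrite hij hi|apply/congrE; exact: code_inj].
have hs : {subset map (code N) l <= iota 0 (size reps ^ N)}.
  move=> c /mapP [x hx ->]; rewrite mem_iota add0n.
  exact: code_lt (hl _ hx).
by have := uniq_leq_size hu hs; rewrite size_map size_iota. Qed.

End Code.


Definition Rn (N : nat) : rel K := fun x y => ~~ `[< congr_mod v pi N x y >].

Lemma pairwise_allpairs_gen (R1 R2 : rel K) (f : K -> K -> K) (s t : seq K) :
  pairwise R1 s -> (forall x, pairwise R2 [seq f x y | y <- t]) ->
  (forall x x' y y', R1 x x' -> y \in t -> y' \in t -> R2 (f x y) (f x' y')) ->
  pairwise R2 [seq f x y | x <- s, y <- t].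
Proof.
move=> + ht hc; elim: s => [|x s IH] //=.
move=> /andP [hx hs].
rewrite pairwise_cat ht IH // andbT.
rewrite andbT; apply/allrelP => u w /mapP [y hy ->] /allpairsP [[x' y'] [/= hx' hy' ->]].
by apply: hc => //; move/allP: hx; apply.
Qed.

Lemma build_list (reps : seq K) (hro : forall r, r \in reps -> inO v r)
  (hinc : forall i j, (i < j < size reps)%N ->
      ~ congr_mod v pi 1 (nth 0 reps i) (nth 0 reps j))
  (a : K) (ha : inO v a) (c k : nat) :
  exists l : seq K, size l = (size reps ^ k)%N /\
    (forall x, x \in l -> inO v x /\ ge c%:Z (x - a)) /\ pairwise (Rn (c + k)) l.
Proof.
have hr : pairwise (Rn 1) reps.
  apply/(pairwiseP 0) => i j; rewrite !inE => hi hj hij.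
  by apply/asboolPn; apply: hinc; rewrite hij hj.
elim: k => [|k [l [hs [hl hp]]]].
  exists [:: a]; split=> //; split=> //.
  by move=> x; rewrite inE => /eqP ->; split=> //; rewrite subrr; left.
set p := pi ^+ (c + k).
exists [seq x + p * r | x <- l, r <- reps]; split.
  by rewrite size_allpairs hs expnSr.
split.
  move=> y /allpairsP [[x r] [/= hx hr' ->]].
  have [hx1 hx2] := hl x hx.
  have hpr : ge c%:Z (p * r).
    have := ge_mul (ge_v p) (hro _ hr'); rewrite /p vpiX addr0; apply: ge_le; lia.
  split; first by apply: ge_add => //; have := ge_mul (ge_v p) (hro _ hr'); rewrite /p vpiX addr0; apply: ge_le; lia.
  have -> : x + p * r - a = (x - a) + p * r by ring.
  exact: ge_add.
apply: (pairwise_allpairs_gen hp).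
  move=> x; rewrite pairwise_map.
  apply: sub_pairwise hr => r r' /asboolPn hn; apply/asboolPn => hc; apply: hn.
  move/congrE: hc; have -> : x + p * r - (x + p * r') = p * (r - r') by ring.
  move=> h; have := ge_mul h (ge_v p^-1); rewrite vV ?piX0 // /p vpiX.
  rewrite mulrC mulrA mulVf ?piX0 // mul1r => h'; apply/congrE; apply: ge_le h'; lia.
move=> x x' r r' /asboolPn hn hr1 hr2; apply/asboolPn => hc; apply: hn.
move/congrE: hc => hc; apply/congrE.
have -> : x - x' = (x + p * r - (x' + p * r')) - p * (r - r') by ring.
apply: ge_sub; first by apply: ge_le hc; lia.
have := ge_mul (ge_v p) (ge_sub (hro _ hr1) (hro _ hr2)); rewrite /p vpiX addr0; apply: ge_le; lia.
Qed.


Lemma sup_max (R : realType) (E : set R) x : E x -> (forall y, E y -> y <= x) -> sup E = x.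
Proof.
move=> hx hub; apply/eqP; rewrite eq_le; apply/andP; split.
  by apply: ge_sup; [exists x|exact: hub].
by apply: ub_le_sup => //; exists x => y; exact: hub.
Qed.

Lemma inf_min (R : realType) (E : set R) x : E x -> (forall y, E y -> x <= y) -> inf E = x.
Proof.
move=> hx hlb; apply/eqP; rewrite eq_le; apply/andP; split.
  by apply: ge_inf => //; exists x => y; exact: hlb.
by apply: lb_le_inf; [exists x|exact: hlb].
Qed.

Lemma haar_empty (R : realType) (S : set K) : (forall x, ~ S x) -> haar_o R v pi q S = 0.
Proof.
move=> hS; rewrite /haar_o.
have hn N : nclasses R v pi N S = 0.
  rewrite /nclasses; apply: sup_max.
    by exists [::] => //; split => // i j /andP [].
  move=> y [l [hl _] <-]; case: l hl => [|x l] hl //=.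
  by exfalso; have [_ ] := hl x (mem_head _ _); apply: hS.
apply: inf_min; first by exists 0%N => //; rewrite hn mul0r.
by move=> y [N _ <-]; rewrite hn mul0r.
Qed.

Lemma haar_ball (R : realType) (S : set K) (a : K) (c : nat) : inO v a ->
  (forall x, S x <-> inO v x /\ ge c%:Z (x - a)) ->
  haar_o R v pi q S = ((q%:R : R) ^+ c)^-1.
Proof.
move=> ha hS.
have [reps [hsz [hro [hinc hcov]]]] := lf_residue hK.
have q0 : (0 < q)%N.
  have [r hr _] := hcov 0 (or_introl (erefl _)).
  by rewrite -hsz; case: reps hr {hsz hro hinc hcov}.
set Q := (q%:R : R).
have Q0 : 0 < Q by rewrite ltr0n.
have Q1 : 1 <= Q by rewrite ler1n.
set P := fun N => [set l : seq K | (forall x, x \in l -> inO v x /\ S x) /\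
           (forall i j, (i < j < size l)%N ->
              ~ congr_mod v pi N (nth 0 l i) (nth 0 l j))]%classic.
have ub N l : P N l -> (size l <= q ^ N)%N.
  move=> [hl hi]; rewrite -hsz; apply: (size_bound hcov) => // x /hl [] //.
have mem N : exists2 l, P N l & size l = (q ^ (N - c))%N.
  have [l [hs [hl hp]]] := build_list hro hinc ha c (N - c).
  exists l; last by rewrite hs hsz.
  split; first by move=> x /hl [h1 h2]; split=> //; apply/hS.
  move=> i j /andP [hij hj].
  case: (leqP c N) => hcN.
    move/(pairwiseP 0): hp => /(_ i j) hp'.
    rewrite subnKC // in hp'; apply/asboolPn; apply: hp' => //; rewrite inE //.
    exact: ltn_trans hij hj.
  have e0 : (N - c = 0)%N by lia.
  by move: hij hj; rewrite hs e0 expn0; lia.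
have ncl_ge N : (Q ^+ (N - c) <= nclasses R v pi N S).
  have [l hl hs] := mem N.
  rewrite /nclasses; apply: ub_le_sup.
    exists (Q ^+ N) => y [l' hl' <-]; rewrite -natrX ler_nat; exact: ub.
  by exists l => //; rewrite hs natrX.
have ncl_c : nclasses R v pi c S = 1.
  rewrite /nclasses; apply: sup_max.
    by have [l hl hs] := mem c; exists l => //; rewrite hs subnn expn0.
  move=> y [l [hl hi] <-]; rewrite lern1 leqNgt; apply/negP => hs.
  have h0 : nth 0 l 0 \in l by apply: mem_nth; exact: ltnW hs.
  have h1 : nth 0 l 1 \in l by apply: mem_nth.
  apply: (hi 0%N 1%N); first by rewrite hs.
  have [_ /hS [_ g0]] := hl _ h0; have [_ /hS [_ g1]] := hl _ h1.
  apply/congrE; have -> : nth 0 l 0 - nth 0 l 1 = (nth 0 l 0 - a) - (nth 0 l 1 - a) by ring.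
  exact: ge_sub.
rewrite /haar_o; apply: inf_min.
  by exists c => //; rewrite ncl_c div1r.
move=> y [N _ <-].
have QN : 0 < Q ^+ N by rewrite exprn_gt0.
have Qc : 0 < Q ^+ c by rewrite exprn_gt0.
rewrite ler_pdivlMr // mulrC ler_pdivrMr //.
apply: le_trans (ler_wpM2r (ltW Qc) (ncl_ge N)).
rewrite -exprD; apply: ler_weXn2l => //; lia.
Qed.

Lemma Xl_val (R : realType) (D t : K) (d T E l : nat) :
  (2 : K) != 0 -> v 2 = E%:Z -> D != 0 -> v D = 0 ->
  (~ exists y : K, D = y ^+ 2) ->
  (forall x : K, qdefect v D x <-> in_ideal v (pi ^+ d) x) ->
  t != 0 -> v t = T%:Z ->
  Xl R v pi q (fun x => D * x ^+ 2) (t ^+ 2) l =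
  if (E + l <= 2 * T + d)%N then ((q%:R : R) ^+ ((E + l + 1) %/ 2))^-1 else 0.
Proof.
move=> h2 hE D0 vD hDns hdef t0 hT.
have b0 : 2 * pi ^+ l != 0 by rewrite mulf_neq0 ?piX0.
have vb : v (2 * pi ^+ l) = (E + l)%:Z by rewrite vM ?piX0 // hE vpiX.
set c := ((E + l + 1) %/ 2)%N.
rewrite /Xl; case: ifP => hn.
  case: (leqP (E + l) (2 * T)) => hn2.
    apply: (@haar_ball R _ 0 c) => //; first by left.
    move=> x /=; rewrite subr0 in_idealE // vb.
    rewrite (char_i (c := c) x vD D0 t0); rewrite ?hT //; try lia.
  have d1 : (1 <= d)%N by lia.
  have [s0 [hs0 s00 vs0]] := good_s0 hDns hdef vD d1.
  have d2e : d%:Z <= v 2 + v 2 := defect_le2e hDns hdef h2 vD.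
  apply: (@haar_ball R _ (t / s0) c).
    by right; rewrite vM ?invr_neq0 // vV // vs0 hT; lia.
  move=> x /=; rewrite in_idealE // vb.
  case: (pselect (inO v x)) => hx; last by split => -[].
  have key : ge (E + l)%N%:Z (D * x ^+ 2 - t ^+ 2) <-> ge c (x - t / s0).
    apply: (char_ii (x:=x) (n:=(E+l)%N%:Z) (c:=c) (d:=d) vD t0 s00 vs0 h2 hs0 d1 d2e) => //; rewrite ?hT; lia.
  by split => -[_ h]; split => //; apply/key.
apply: haar_empty => x /= [_]; rewrite in_idealE // vb.
apply: (char_iii (d := d)) => //; first exact: defect_le hDns hdef.
rewrite hT; lia.
Qed.


Lemma q_ge2 : (2 <= q)%N.
Proof.
have [reps [hsz [hro [hinc hcov]]]] := lf_residue hK.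
have [r0 h0 c0] := hcov 0 (or_introl (erefl _)).
have [r1 h1 c1] : exists2 r, r \in reps & congr_mod v pi 1 1 r.
  by apply: hcov; right; rewrite v1.
rewrite -hsz; case: reps {hsz hro hinc hcov} h0 h1 => [|a [|b s]] //.
rewrite !inE => /eqP e0 /eqP e1; exfalso.
move/congrE: c0; move/congrE: c1; rewrite e0 e1 => g1 g0.
have := ge_sub g1 g0; rewrite (_ : 1 - a - (0 - a) = 1); last by ring.
by case=> [/eqP|]; [rewrite oner_eq0|rewrite v1].
Qed.

End Val.

Local Open Scope ring_scope.
Local Open Scope complex_scope.
Set Implicit Arguments. Unset Strict Implicit. Unset Printing Implicit Defensive.

Lemma divtest (E j : nat) : ((E + (2 * j + 1) + 1) %/ 2 = E %/ 2 + j + 1)%N.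
Proof. lia. Qed.

Section Geo.
Variables (R : realType) (Q : R) (z : R[i]) (E : nat).
Hypothesis hQ : 0 < Q.
Let w := z * (Q^-1)%:C.
Let x := z * w.
Hypothesis hx : 1 - x != 0.
Let A := ((Q ^+ ((E + 1) %/ 2))^-1)%:C.
Let B := ((Q ^+ (E %/ 2))^-1)%:C.
Let f (l : nat) := z ^+ l * ((Q ^+ ((E + l + 1) %/ 2))^-1)%:C.
Let G j := (1 - x ^+ j) / (1 - x).

Lemma GS j : G j.+1 = G j + x ^+ j.
Proof. rewrite /G exprS; field. by []. Qed.

Lemma G0 : G 0 = 0.
Proof. by rewrite /G expr0 subrr mul0r. Qed.

Lemma f_even j : f (2 * j) = A * x ^+ j.
Proof.
rewrite /f.
have -> : ((E + 2 * j + 1) %/ 2 = (E + 1) %/ 2 + j)%N by lia.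
have Q0 : Q%:C != 0 by rewrite (inj_eq (@complexI _)) gt_eqF.
rewrite /A /x /w exprD mulnC exprM !fmorphV !rmorphM !rmorphXn /=.
rewrite !exprMn exprVn.
field. by rewrite !expf_neq0. Qed.


Lemma f_odd j : f (2 * j + 1) = w * B * x ^+ j.
Proof.
rewrite /f.
have -> : ((E + (2 * j + 1) + 1) %/ 2 = E %/ 2 + j + 1)%N by lia.
have Q0 : Q%:C != 0 by rewrite (inj_eq (@complexI _)) gt_eqF.
rewrite /B /x /w !exprD expr1 expr0 mulr1 !fmorphV !rmorphM !rmorphXn /=.
rewrite !exprMn exprVn.
field. by rewrite !expf_neq0. Qed.

Lemma sums j : \sum_(l < 2 * j) f l = A * G j + w * B * G j /\
  \sum_(l < (2 * j).+1) f l = A * G j.+1 + w * B * G j.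
Proof.
elim: j => [|j [IH1 IH2]].
  rewrite muln0 big_ord0 big_ord1 G0 GS G0 !mulr0 expr0 add0r addr0. have := f_even 0. rewrite muln0 expr0 mulr1 => ->. by rewrite add0r mulr1.
have e1 : (2 * j.+1 = (2 * j).+1.+1)%N by lia.
have S1 : \sum_(l < 2 * j.+1) f l = A * G j.+1 + w * B * G j.+1.
  rewrite e1 big_ord_recr /= IH2 -[(2 * j).+1]addn1 f_odd GS; ring.
split=> //.
by rewrite big_ord_recr /= S1 f_even !GS; ring.
Qed.

End Geo.

Unset Implicit Arguments.
Set Strict Implicit.

Import Order.TTheory GRing.Theory Num.Theory.
Local Open Scope ring_scope.
Local Open Scope complex_scope.

Lemma divz_e1 (E : nat) : ((E%:Z + 1) %/ 2)%Z = ((E + 1) %/ 2)%N%:Z.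
Proof. lia. Qed.
Lemma divz_e2 (E : nat) : (E%:Z %/ 2)%Z = (E %/ 2)%N%:Z.
Proof. lia. Qed.
Lemma divz_e3 (T d E : nat) : (E <= d + 2 * T)%N ->
  T%:Z + ((d%:Z + 1 - E%:Z + 1) %/ 2)%Z = ((2 * T + d - E).+2 %/ 2)%N%:Z.
Proof. move=> h; lia. Qed.
Lemma divz_e4 (T d E : nat) : (E <= d + 2 * T)%N ->
  T%:Z + ((d%:Z + 1 - E%:Z) %/ 2)%Z = ((2 * T + d - E).+1 %/ 2)%N%:Z.
Proof. move=> h; lia. Qed.
Lemma parity (m : nat) : exists j, m = (2 * j)%N \/ m = (2 * j).+1.
Proof. by exists (m %/ 2)%N; lia. Qed.
Lemma half_e (j : nat) : ((2 * j).+1 %/ 2 = j /\ (2 * j) %/ 2 = j /\ (2 * j).+2 %/ 2 = j.+1)%N.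
Proof. lia. Qed.

Theorem proposition5p1 (R : realType) (K : fieldType) (v : K -> int) (pi : K) (q : nat)
    (hK : is_local_field v pi q)
    (h2 : (2 : K) != 0) (hres2 : (0 < v 2)%R)
    (Delta : K) (hDn0 : Delta != 0) (hDunit : v Delta = 0)
    (hDns : ~ exists y : K, Delta = y ^+ 2)
    (d : nat) (hdef : forall x : K, qdefect v Delta x <-> in_ideal v (pi ^+ d) x)
    (z : R[i]) (hz : `|z| < 1)
    (t : K) (ht0 : t != 0) (T : nat) (hT : v t = T%:Z) :
  let e : int := v 2 in
  let w : R[i] := z * ((q%:R : R) ^-1)%:C in
  let B : K -> K := fun x => Delta * x ^+ 2 in
  let api : R := @absv R K v q pi in
  (@absv R K v q (pi ^+ d * t ^+ 2) <= @absv R K v q 2 ->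
    @XB_is R K v pi q B z (t ^+ 2)
      ((api ^ (divz (e + 1) 2))%:C
         * (1 - (z * w) ^ (T%:Z + divz (d%:Z + 1 - e + 1) 2)) / (1 - z * w)
       + w * (api ^ (divz e 2))%:C
         * (1 - (z * w) ^ (T%:Z + divz (d%:Z + 1 - e) 2)) / (1 - z * w))) /\
  (~ (@absv R K v q (pi ^+ d * t ^+ 2) <= @absv R K v q 2) ->
    @XB_is R K v pi q B z (t ^+ 2) 0).
Proof.
move=> e w B api.
have [E hE] : exists E : nat, v (2 : K) = E%:Z.
  by exists (absz (v 2)); rewrite gez0_abs // ltW.
have q2 := q_ge2 hK.
set Q := (q%:R : R).
have Q1 : 1 < Q by rewrite ltr1n.
have Q0 : 0 < Q by apply: lt_trans Q1.
have hX l : Xl R v pi q B (t ^+ 2) l =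
    if (E + l <= 2 * T + d)%N then (Q ^+ ((E + l + 1) %/ 2))^-1 else 0.
  exact: (Xl_val hK R l h2 hE hDn0 hDunit hDns hdef ht0 hT).
have habs : (absv R v q (pi ^+ d * t ^+ 2) <= absv R v q 2) = (E <= d + 2 * T)%N.
  have p0 : pi ^+ d * t ^+ 2 != 0 by rewrite mulf_neq0 ?(piX0 hK) // expf_neq0.
  rewrite /absv (negbTE p0) (negbTE h2) (vM hK) ?expf_neq0 ?(piX0 hK) ?(pi0 hK) //.
  rewrite (vpiX hK) (v2sq hK) // hT hE.
  have -> : (d%:Z + (T%:Z + T%:Z)) = (d + 2 * T)%N%:Z by lia.
  rewrite -!exprnN lef_pV2 ?posrE ?exprn_gt0 //.
  by rewrite ler_eXn2l.
have hc0 : (0 : R[i]) <= (Q^-1)%:C.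
  by rewrite -(raddf0 (real_complex R)) lecR invr_ge0 ltW.
have hc1 : (Q^-1)%:C <= (1 : R[i]).
  by rewrite -(rmorph1 (real_complex R)) lecR invf_le1 // ltW.
have hzw : 1 - z * w != 0.
  apply/eqP => /eqP; rewrite subr_eq0 => /eqP h1.
  have nz0 : 0 <= `|z| := normr_ge0 z.
  have : `|z * w| < 1.
    rewrite /w !normrM (ger0_norm hc0).
    apply: (le_lt_trans _ hz); rewrite mulrA -[X in _ <= X]mulr1.
    apply: ler_pM => //; first by rewrite mulr_ge0.
    by rewrite -[X in _ <= X]mulr1 ler_wpM2l // ltW.
  by rewrite -h1 normr1 ltxx.
have series_eq : forall (a : nat -> R[i]) (L : R[i]) (N : nat),
    (forall n, (N <= n)%N -> \sum_(i < n) a i = L) -> series_to a L.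
  move=> a L N hN eps heps; exists N => n hn; rewrite hN // subrr normr0.
  by rewrite -(raddf0 (real_complex R)) ltcR.
rewrite habs; split => hc.
  set M := (2 * T + d - E)%N.
  apply: (series_eq _ _ M.+1) => n hn.
  have -> : \sum_(i < n) z ^+ i * (Xl R v pi q B (t ^+ 2) i)%:C =
            \sum_(i < M.+1) z ^+ i * ((Q ^+ ((E + i + 1) %/ 2))^-1)%:C.
    rewrite -(subnKC hn); elim: (n - M.+1)%N => [|k IH].
      rewrite addn0; apply: eq_bigr => i _; rewrite hX ifT //.
      have := ltn_ord i; lia.
    rewrite addnS big_ord_recr /= IH hX ifF; last by lia.
    by rewrite raddf0 mulr0 addr0.
  have api_e : api = Q^-1 by rewrite /api /absv (negbTE (pi0 hK)) (vpi hK) exprN1.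
  rewrite /e hE api_e.
  have hM : M = (2 * T + d - E)%N by [].
  rewrite divz_e1 divz_e2 (divz_e3 T d E hc) (divz_e4 T d E hc) -/M -!exprnP !exprVn /w.
  have [j [hj|hj]] := parity M.+1; have [h1 [h2' h3]] := half_e j.
    have [S1 _] := sums E Q0 hzw j.
    have hj2 : (M.+2 = (2 * j).+1)%N by rewrite hj.
    by rewrite hj S1 h1 h2' !mulrA.
  have [_ S2] := sums E Q0 hzw j.
  have hj2 : (M.+2 = (2 * j).+2)%N by rewrite hj.
  by rewrite hj S2 h1 h3 !mulrA.
have h0 i : Xl R v pi q B (t ^+ 2) i = 0 by rewrite hX ifF //; lia.
apply: (series_eq _ _ 0%N) => n _; apply: big1 => i _.
by rewrite h0 raddf0 mulr0.
Qed.
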